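(* Let $X_2$ be a first-order linear partial differential operator and $H\neq 0$ a linear partial differential operator, both in $\mathbf{F}[D_{x_1},\ldots,D_{x_n}]$. Then the element $\omega = -[X_2,H]H^{-1}$ of the skew Ore field $\mathbf{F}(D_{x_1},\ldots,D_{x_n})$ is a differential operator (i.e. lies in $\mathbf{F}[D_{x_1},\ldots,D_{x_n}]$) if and only if there is a function $\psi\in\mathbf{F}$ such that $HX_2 = (X_2+\psi)H$.
   Context: $\mathbf{F}$ is a differential field of functions of $x_1,\ldots,x_n$; $\mathbf{F}[D_{x_1},\ldots,D_{x_n}]$ is the ring of linear partial differential operators with coefficients in $\mathbf{F}$, and $\mathbf{F}(D_{x_1},\ldots,D_{x_n})$ its skew Ore field of formal left fractions $P^{-1}Q$ (with $P^{-1}Q\sim K^{-1}N$ iff $SP=TK$, $SQ=TN$ for some nonzero operators $S,T$). $[A,B]=AB-BA$. *)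

(* Defs.v *)
From HB Require Import structures.
From mathcomp Require Import all_boot all_order all_algebra.
From mathcomp Require Import mpoly.
Set Implicit Arguments. Unset Strict Implicit. Unset Printing Implicit Defensive.
Import GRing.Theory.
Local Open Scope ring_scope.

Record diffField (F : fieldType) (n : nat) := DiffField {
  der : 'I_n -> F -> F;
  der_add : forall i a b, der i (a + b) = der i a + der i b;
  der_mul : forall i a b, der i (a * b) = der i a * b + a * der i b;
  der_comm : forall i j a, der i (der j a) = der j (der i a)
}.

(* Linear partial differential operators F[D_1,...,D_n]:
   the operator  sum_m c_m D^m  (coefficients on the left) is represented by
   the multivariate polynomial  sum_m c_m 'X^m  in {mpoly F[n]} (additive
   structure and F-left-scaling agree); the product is the
   non-commutative one given by D_i a = a D_i + d_i(a). *)
Section LPDO.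
Variables (F : fieldType) (n : nat) (d : diffField F n).

(* left multiplication by D_i :  D_i (sum c_m D^m) = sum (d_i c_m) D^m + c_m D^(m+e_i) *)
Definition lmulD (i : 'I_n) (L : {mpoly F[n]}) : {mpoly F[n]} :=
  map_mpoly (der d i) L + L * 'X_i.

Definition lmulDm (m : 'X_{1..n}) (L : {mpoly F[n]}) : {mpoly F[n]} :=
  foldr (fun i acc => iter (m i) (lmulD i) acc) L (enum 'I_n).

Definition opmul (L M : {mpoly F[n]}) : {mpoly F[n]} :=
  \sum_(m <- msupp L) (L@_m) *: lmulDm m M.

Definition opcomm (A B : {mpoly F[n]}) : {mpoly F[n]} :=
  opmul A B - opmul B A.

Definition has_order_le (k : nat) (L : {mpoly F[n]}) : Prop :=
  forall m, m \in msupp L -> (mdeg m <= k)%N.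

End LPDO.

(* Main.v *)
Require Import Defs.
From HB Require Import structures.
From mathcomp Require Import all_boot all_order all_algebra.
From mathcomp Require Import mpoly.
From mathcomp Require Import ring.
From mathcomp Require ssrcomplements.
From mathcomp Require Import zify.
Import GRing.Theory.
Local Open Scope ring_scope.

Section S.
Variables (F : fieldType) (n : nat) (d : diffField F n).

Lemma msizeMle (p q : {mpoly F[n]}) : (msize (p * q) <= (msize p + msize q).-1)%N.
Proof.
have [->|np] := eqVneq p 0; first by rewrite mul0r msize0.
have [->|nq] := eqVneq q 0; first by rewrite mulr0 msize0.
by rewrite msizeM.
Qed.

Lemma msize_map (f : F -> F) (p : {mpoly F[n]}) : (msize (map_mpoly f p) <= msize p)%N.
Proof.
rewrite /map_mpoly /mmap /=; apply: leq_trans; first apply: msize_sum.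
apply/bigmax_leqP_seq => m mp _.
rewrite /mmap1 -mpolyXE_id /= mul_mpolyC.
apply: (leq_trans (msizeZ_le _ _)); rewrite msizeX.
exact: msize_mdeg_lt.
Qed.

Lemma msizeB_le (p q : {mpoly F[n]}) : (msize (p - q) <= maxn (msize p) (msize q))%N.
Proof. by apply: (leq_trans (msizeD_le _ _)); rewrite msizeN. Qed.

Lemma iter_lmulD (i : 'I_n) (A : {mpoly F[n]}) a k :
  (msize A <= a.+1)%N ->
  (msize (iter k (lmulD d i) A - A * 'X_i ^+ k) <= a + k)%N.
Proof.
move=> hA; elim: k => [|k IH]; first by rewrite expr0 mulr1 subrr msize0.
rewrite iterS.
set B := iter k _ A in IH *.
have hB : (msize B <= (a + k).+1)%N.
  rewrite -[B](subrK (A * 'X_i ^+ k)).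
  apply: (leq_trans (msizeD_le _ _)); rewrite geq_max (leq_trans IH) //=.
  apply: (leq_trans (msizeMle _ _)).
  rewrite mpolyXn msizeX mdegMn mdeg1 mul1n.
  by rewrite addnS /= -addSn leq_add2r.
have -> : lmulD d i B - A * 'X_i ^+ k.+1 =
   map_mpoly (der d i) B + (B - A * 'X_i ^+ k) * 'X_i.
  by rewrite /lmulD mulrBl exprSr mulrA; rewrite addrA.
apply: (leq_trans (msizeD_le _ _)); rewrite geq_max; apply/andP; split.
  by rewrite addnS; apply: (leq_trans (msize_map _ _)).
apply: (leq_trans (msizeMle _ _)); rewrite msizeX mdeg1 addnS /=.
by rewrite addn1 addnS ltnS.
Qed.

Lemma foldr_lmulD (m : 'X_{1..n}) (M : {mpoly F[n]}) j (s : seq 'I_n) :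
  (msize M <= j.+1)%N ->
  (msize (foldr (fun i acc => iter (m i) (lmulD d i) acc) M s
      - M * \prod_(i <- s) 'X_i ^+ m i) <= j + \sum_(i <- s) m i)%N /\
  (msize (\prod_(i <- s) ('X_i ^+ m i : {mpoly F[n]})) <= (\sum_(i <- s) m i).+1)%N.
Proof.
move=> hM; elim: s => [|i s [IH1 IH2]].
  by rewrite !big_nil mulr1 subrr msize0 msize1.
rewrite /= !big_cons.
set V := foldr _ M s in IH1 *.
set P := \prod_(i <- s) _ in IH1 IH2 *.
set S := \sum_(i <- s) _ in IH1 IH2 *.
have hX : (msize ('X_i ^+ m i : {mpoly F[n]}) = (m i).+1)%N.
  by rewrite mpolyXn msizeX mdegMn mdeg1 mul1n.
split; last first.
  apply: (leq_trans (msizeMle _ _)); rewrite hX addSn /= -addnS leq_add2l //.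
set V' := iter _ _ V.
have hV : (msize V <= (j + S).+1)%N.
  rewrite -[V](subrK (M * P)).
  apply: (leq_trans (msizeD_le _ _)); rewrite geq_max (leq_trans IH1) //=.
  apply: (leq_trans (msizeMle _ _)).
  have := leq_add hM IH2; rewrite addSn /= addnS.
  by case: (msize M + msize P)%N.
have := @iter_lmulD i V _ (m i) hV; rewrite -/V' => hI.
have -> : V' - M * ('X_i ^+ m i * P) =
   (V' - V * 'X_i ^+ m i) + (V - M * P) * 'X_i ^+ m i.
  by ring.
apply: (leq_trans (msizeD_le _ _)); rewrite geq_max; apply/andP; split.
  by rewrite (leq_trans hI) // -addnA [(S + _)%N]addnC.
apply: (leq_trans (msizeMle _ _)); rewrite hX.
rewrite addnS /=.
by rewrite (addnC (m i)) addnA leq_add2r.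
Qed.

Lemma lmulDm_le (m : 'X_{1..n}) (M : {mpoly F[n]}) j :
  (msize M <= j.+1)%N ->
  (msize (lmulDm d m M - M * 'X_[m]) <= j + mdeg m)%N.
Proof.
move=> hM; have [h _] := @foldr_lmulD m M j (enum (ordinal n)) hM.
rewrite /lmulDm mpolyXE_id mdegE.
by rewrite !big_enum /= in h.
Qed.

Lemma opmul_sub (A M : {mpoly F[n]}) a j :
  (msize A <= a.+1)%N -> (msize M <= j.+1)%N ->
  (msize (opmul d A M - A * M) <= j + a)%N.
Proof.
move=> hA hM.
have -> : opmul d A M - A * M =
   \sum_(m <- msupp A) A@_m *: (lmulDm d m M - M * 'X_[m]).
  rewrite {2}[A]mpolyE mulr_suml /opmul -sumrB; apply: eq_bigr => m _.
  by rewrite scalerBr -scalerAl mulrC.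
apply: leq_trans; first apply: msize_sum.
apply/bigmax_leqP_seq => m mA _.
apply: (leq_trans (msizeZ_le _ _)); apply: (leq_trans (@lmulDm_le m M j hM)).
rewrite leq_add2l -ltnS; exact: (leq_trans (msize_mdeg_lt mA)).
Qed.

Lemma opmulE (A M : {mpoly F[n]}) k : (msize A <= k)%N ->
  opmul d A M = \sum_(m : 'X_{1..n < k}) A@_m *: lmulDm d m M.
Proof.
move=> le_pi; set I : subFinType _ := 'X_{1..n < k}.
rewrite /opmul (ssrcomplements.big_mksub I) ?msupp_uniq //=; first last.
  by move=> x /msize_mdeg_lt /leq_trans; apply.
rewrite big_rmcond //= => j /memN_msupp_eq0 ->.
by rewrite scale0r.
Qed.

Lemma opmulDl (A B M : {mpoly F[n]}) :
  opmul d (A + B) M = opmul d A M + opmul d B M.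
Proof.
pose k := (msize A + msize B)%N.
rewrite !(@opmulE _ _ k) ?leq_addr ?leq_addl //; last first.
  by apply: (leq_trans (msizeD_le _ _)); rewrite geq_max leq_addr leq_addl.
rewrite -big_split /=; apply: eq_bigr => m _.
by rewrite mcoeffD scalerDl.
Qed.

Lemma opmulC (c : F) (M : {mpoly F[n]}) : opmul d c%:MP M = c *: M.
Proof.
rewrite /opmul msuppC; have [->|nc] := eqVneq c 0; first by rewrite big_nil scale0r.
rewrite big_seq1 mcoeffC eqxx mulr1; congr (_ *: _).
rewrite /lmulDm; elim: (enum 'I_n) => //= i s ->.
by rewrite mnm0E.
Qed.
End S.

Theorem lemma2 (F : fieldType) (n : nat) (d : diffField F n)
    (X2 H : {mpoly F[n]}) :
  has_order_le 1 X2 -> H != 0 ->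
  ((exists L : {mpoly F[n]}, - opcomm d X2 H = opmul d L H) <->
   (exists psi : F, opmul d H X2 = opmul d (X2 + psi%:MP) H)).
Proof.
move=> hX2 nH; split; last first.
  case=> psi hp; exists psi%:MP.
  by rewrite /opcomm hp opmulDl opprB addrC addKr.
case=> L hL.
have hHX : opmul d H X2 = opmul d X2 H + opmul d L H.
  by rewrite -hL /opcomm opprB addrC subrK.
suff hl : (msize L <= 1)%N.
  exists L@_0; rewrite -(msize1_polyC hl) opmulDl //.
have sX : (msize X2 <= 2)%N.
  rewrite msizeE; apply/bigmax_leqP_seq => m mX _; exact: hX2.
have sH : msize H = (msize H).-1.+1.
  by rewrite prednK // lt0n msize_poly_eq0.
set h := (msize H).-1 in sH.
rewrite leqNgt; apply/negP => lL.
have nL : L != 0 by rewrite -msize_poly_eq0; case: (msize L) lL.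
set l := msize L in lL.
have sLH : msize (L * H) = (l + h)%N.
  by rewrite msizeM // sH addnS.
have E1 := @opmul_sub F n d X2 H 1 h sX (eq_leq sH).
have E2 := @opmul_sub F n d H X2 h 1 (eq_leq sH) sX.
have E3 := @opmul_sub F n d L H l.-1 h _ (eq_leq sH).
rewrite prednK in E3; last by apply: ltn_trans lL.
have E3' := E3 (leqnn _).
have eq : L * H = - ((opmul d X2 H - X2 * H) - (opmul d H X2 - H * X2))
                  - (opmul d L H - L * H).
  rewrite -hL /opcomm mulrC; ring.
have : (msize (L * H) <= maxn (maxn (h + 1) (1 + h)) (h + l.-1))%N.
  rewrite eq; apply: (leq_trans (msizeB_le _ _ _ _)).
  rewrite geq_max !leq_max E3' orbT andbT msizeN.
  have E12 := leq_trans (msizeB_le _ _ (opmul d X2 H - X2 * H) (opmul d H X2 - H * X2)) _.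
  rewrite E12 //.
  by rewrite geq_max E1 addnC E2.
rewrite sLH; move: lL; clear; lia.
Qed.
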